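(* Let $(X,d)$ be a $\delta$-hyperbolic geodesic metric space, $\delta\ge0$. Then for all $x,y\in X$ and $s,t\ge0$, the set $B(x,s)\cap B(y,t)$ has eccentricity at most $2\delta$; and if it is nonempty, there are $c\in X$, $r\ge 0$ with $d_H(B(x,s)\cap B(y,t),B(c,r))\le 2\delta$.
   Context: $B(x,r)=\{z\in X: d(x,z)\le r\}$ denotes the closed ball. A set $S\subseteq X$ has eccentricity at most $\delta$ if $S=\emptyset$ or there exist $R\ge 0$ and $c,c'\in X$ with $B(c,R)\subseteq S\subseteq B(c',R+\delta)$. $d_H$ is Hausdorff distance. A geodesic metric space is $\delta$-hyperbolic if for every geodesic triangle each side is contained in the $\delta$-neighbourhood of the union of the other two sides. *)

(* Defs.v *)
From Stdlib Require Import Reals Lra.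
Open Scope R_scope.

Record MetricSpace := {
  mcarrier :> Type;
  mdist : mcarrier -> mcarrier -> R;
  mdist_refl : forall x, mdist x x = 0;
  mdist_eq : forall x y, mdist x y = 0 -> x = y;
  mdist_sym : forall x y, mdist x y = mdist y x;
  mdist_tri : forall x y z, mdist x z <= mdist x y + mdist y z
}.

Section Defs.
Variable X : MetricSpace.
Notation d := (mdist X).

Definition cball (x : X) (r : R) : X -> Prop := fun z => d x z <= r.

Definition inter (A B : X -> Prop) : X -> Prop := fun z => A z /\ B z.
Definition union (A B : X -> Prop) : X -> Prop := fun z => A z \/ B z.
Definition subset (A B : X -> Prop) : Prop := forall z, A z -> B z.
Definition is_empty (A : X -> Prop) : Prop := forall z, ~ A z.

Definition geodesic_path (x y : X) (g : R -> X) : Prop :=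
  g 0 = x /\ g (d x y) = y /\
  forall s t, 0 <= s <= d x y -> 0 <= t <= d x y ->
    d (g s) (g t) = Rabs (s - t).

Definition geodesic_segment (x y : X) (S : X -> Prop) : Prop :=
  exists g, geodesic_path x y g /\
    forall z, S z <-> exists t, 0 <= t <= d x y /\ g t = z.

Definition geodesic_space : Prop :=
  forall x y : X, exists g, geodesic_path x y g.

Definition nbhd (A : X -> Prop) (r : R) : X -> Prop :=
  fun z => exists a, A a /\ d z a <= r.

Definition delta_hyperbolic (delta : R) : Prop :=
  geodesic_space /\
  forall (x y z : X) (Sxy Syz Szx : X -> Prop),
    geodesic_segment x y Sxy -> geodesic_segment y z Syz ->
    geodesic_segment z x Szx ->
    subset Sxy (nbhd (union Syz Szx) delta) /\
    subset Syz (nbhd (union Szx Sxy) delta) /\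
    subset Szx (nbhd (union Sxy Syz) delta).

Definition ecc_le (S : X -> Prop) (delta : R) : Prop :=
  is_empty S \/
  exists (R0 : R) (c c' : X), 0 <= R0 /\
    subset (cball c R0) S /\ subset S (cball c' (R0 + delta)).

(* d(z, A) <= r, where d(z,A) = inf_{a in A} d(z,a) *)
Definition dist_set_le (z : X) (A : X -> Prop) (r : R) : Prop :=
  forall eps, 0 < eps -> exists a, A a /\ d z a < r + eps.

Definition hausdorff_le (A B : X -> Prop) (r : R) : Prop :=
  (forall a, A a -> dist_set_le a B r) /\ (forall b, B b -> dist_set_le b A r).

End Defs.

(* Main.v *)
Require Import Defs.
From Stdlib Require Import Reals Lra.
Open Scope R_scope.

Lemma geo_pt (X : MetricSpace) (x y : X) g a :
  geodesic_path X x y g -> 0 <= a <= mdist X x y ->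
  mdist X x (g a) = a /\ mdist X (g a) y = mdist X x y - a.
Proof.
  intros [H0 [H1 H2]] Ha.
  pose proof (mdist_refl X x) as Hr.
  assert (HD : 0 <= mdist X x y) by lra.
  split.
  - specialize (H2 0 a). rewrite H0 in H2. rewrite H2 by lra.
    rewrite Rabs_left1 by lra. lra.
  - specialize (H2 a (mdist X x y)). rewrite H1 in H2. rewrite H2 by lra.
    rewrite Rabs_left1 by lra. lra.
Qed.

Lemma dist_nonneg (X : MetricSpace) (x y : X) : 0 <= mdist X x y.
Proof.
  pose proof (mdist_tri X x y x). rewrite mdist_refl, (mdist_sym X y x) in H. lra.
Qed.

Lemma core (X : MetricSpace) (delta : R) :
  0 <= delta -> delta_hyperbolic X delta ->
  forall (x y : X) (s t : R), 0 <= s -> 0 <= t -> mdist X x y <= s + t ->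
  exists c R0, 0 <= R0 /\
    subset X (cball X c R0) (inter X (cball X x s) (cball X y t)) /\
    subset X (inter X (cball X x s) (cball X y t)) (cball X c (R0 + 2 * delta)).
Proof.
  intros Hd [Hgeo Hslim] x y s t Hs Ht HD.
  set (D := mdist X x y) in *.
  destruct (Rle_dec (D + t) s) as [C1|C1].
  { exists y, t. split; [lra|]. split.
    - intros z Hz. unfold cball in *. split; [|lra].
      pose proof (mdist_tri X x y z). fold D in H. lra.
    - intros z [_ Hz]. unfold cball in *. lra. }
  destruct (Rle_dec (D + s) t) as [C2|C2].
  { exists x, s. split; [lra|]. split.
    - intros z Hz. unfold cball in *. split; [lra|].
      pose proof (mdist_tri X y x z). rewrite (mdist_sym X y x) in H. fold D in H. lra.
    - intros z [Hz _]. unfold cball in *. lra. }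
  destruct (Hgeo x y) as [g Hg].
  apply Rnot_le_lt in C1. apply Rnot_le_lt in C2.
  remember ((D + s - t) / 2) as a eqn:Ea.
  assert (Ha : 0 <= a <= D) by lra.
  destruct (geo_pt X x y g a Hg Ha) as [Hxa Hay]. fold D in Hxa, Hay.
  exists (g a), ((s + t - D) / 2). split; [lra|]. split.
  - intros z Hz. unfold cball in *. split.
    + pose proof (mdist_tri X x (g a) z). lra.
    + pose proof (mdist_tri X y (g a) z). rewrite (mdist_sym X y (g a)) in H. lra.
  - intros z [Hxz Hyz]. unfold cball in *.
    destruct (Hgeo y z) as [g1 Hg1]. destruct (Hgeo z x) as [g2 Hg2].
    set (Sxy := fun w => exists u, 0 <= u <= mdist X x y /\ g u = w).
    set (Syz := fun w => exists u, 0 <= u <= mdist X y z /\ g1 u = w).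
    set (Szx := fun w => exists u, 0 <= u <= mdist X z x /\ g2 u = w).
    destruct (Hslim x y z Sxy Syz Szx) as [Hsub _].
    { exists g. split; [exact Hg| intro w; tauto]. }
    { exists g1. split; [exact Hg1| intro w; tauto]. }
    { exists g2. split; [exact Hg2| intro w; tauto]. }
    destruct (Hsub (g a)) as [w [Hw Hcw]].
    { exists a. split; [exact Ha| reflexivity]. }
    rewrite (mdist_sym X (g a) z).
    destruct Hw as [[u [Hu <-]]|[u [Hu <-]]].
    + destruct (geo_pt X y z g1 u Hg1 Hu) as [E1 E2].
      pose proof (mdist_tri X z (g1 u) (g a)).
      rewrite (mdist_sym X z (g1 u)), E2, (mdist_sym X (g1 u) (g a)) in H.
      pose proof (mdist_tri X (g a) (g1 u) y).
      rewrite (mdist_sym X (g1 u) y), E1 in H0. fold D in Hay. lra.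
    + destruct (geo_pt X z x g2 u Hg2 Hu) as [E1 E2].
      pose proof (mdist_tri X z (g2 u) (g a)).
      rewrite E1, (mdist_sym X (g2 u) (g a)) in H.
      pose proof (mdist_tri X x (g2 u) (g a)).
      rewrite (mdist_sym X x (g2 u)), E2, (mdist_sym X (g2 u) (g a)) in H0.
      rewrite (mdist_sym X z x) in H0. lra.
Qed.

Theorem proposition3p2 (X : MetricSpace) (delta : R) :
  0 <= delta -> delta_hyperbolic X delta ->
  forall (x y : X) (s t : R), 0 <= s -> 0 <= t ->
    ecc_le X (inter X (cball X x s) (cball X y t)) (2 * delta) /\
    ((exists z, inter X (cball X x s) (cball X y t) z) ->
     exists (c : X) (r : R), 0 <= r /\
       hausdorff_le X (inter X (cball X x s) (cball X y t)) (cball X c r) (2 * delta)).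
Proof.
  intros Hd Hh x y s t Hs Ht.
  destruct (Rle_dec (mdist X x y) (s + t)) as [C|C].
  - destruct (core X delta Hd Hh x y s t Hs Ht C) as [c [R0 [HR [H1 H2]]]].
    split.
    + right. exists R0, c, c. auto.
    + intros _. exists c, R0. split; [exact HR|]. split.
      * intros z Hz eps Heps.
        specialize (H2 z Hz). unfold cball in H2.
        destruct (proj1 Hh c z) as [h Hgh].
        destruct (Rle_dec (mdist X c z) R0) as [L|L].
        { exists z. split; [exact L|]. rewrite mdist_refl. lra. }
        apply Rnot_le_lt in L. assert (Hu : 0 <= R0 <= mdist X c z) by lra.
        destruct (geo_pt X c z h R0 Hgh Hu) as [E1 E2].
        exists (h R0). split; [unfold cball; lra|].
        rewrite mdist_sym, E2. lra.
      * intros z Hz eps Heps. exists z. split; [apply H1; exact Hz|].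
        rewrite mdist_refl. lra.
  - apply Rnot_le_lt in C. assert (He : is_empty X (inter X (cball X x s) (cball X y t))).
    { intros z [Hx Hy]. unfold cball in *.
      pose proof (mdist_tri X x z y). rewrite (mdist_sym X z y) in H. lra. }
    split; [left; exact He|].
    intros [z Hz]. exfalso. exact (He z Hz).
Qed.
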